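(* Let $F$ be a field and let $V$ be an $F$-vector space of dimension $2m$. If $F$ admits a field extension of degree $m$, then there exists an $m$-dimensional symplectic subspace $K \subset \mathcal{A}(V)$.
   Context: $\mathcal{A}(V)$ denotes the $F$-vector space of alternating bilinear forms on $V$, i.e. bilinear maps $b: V \times V \to F$ with $b(v,v)=0$ for all $v$. A subspace $K \subseteq \mathcal{A}(V)$ is called symplectic if every nonzero element of $K$ is non-degenerate as a bilinear form on $V$. *)

(* Defs.v *)
From HB Require Import structures.
From mathcomp Require Import all_boot all_algebra all_field.
Set Implicit Arguments. Unset Strict Implicit. Unset Printing Implicit Defensive.
Import GRing.Theory.
Local Open Scope ring_scope.

Definition bilinear_form (F : fieldType) (V : vectType F) (b : V -> V -> F) : Prop :=
  (forall (a : F) (x y z : V), b (a *: x + y) z = a * b x z + b y z) /\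
  (forall (a : F) (x y z : V), b z (a *: x + y) = a * b z x + b z y).

Definition alternating_form (F : fieldType) (V : vectType F) (b : V -> V -> F) : Prop :=
  bilinear_form b /\ forall v : V, b v v = 0.

Definition nondegenerate (F : fieldType) (V : vectType F) (b : V -> V -> F) : Prop :=
  forall v : V, (forall w : V, b v w = 0) -> v = 0.

Definition zero_form (F : fieldType) (V : vectType F) : V -> V -> F := fun _ _ => 0.

Definition lincomb_forms (F : fieldType) (V : vectType F) (m : nat)
  (c : 'I_m -> F) (b : 'I_m -> V -> V -> F) : V -> V -> F :=
  fun x y => \sum_(i < m) c i * b i x y.

Definition span_forms (F : fieldType) (V : vectType F) (m : nat)
  (b : 'I_m -> V -> V -> F) : (V -> V -> F) -> Prop :=
  fun f => exists c : 'I_m -> F, f = lincomb_forms c b.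

Definition forms_free (F : fieldType) (V : vectType F) (m : nat)
  (b : 'I_m -> V -> V -> F) : Prop :=
  forall c : 'I_m -> F, lincomb_forms c b = @zero_form F V -> forall i, c i = 0.

Definition symplectic (F : fieldType) (V : vectType F) (K : (V -> V -> F) -> Prop) : Prop :=
  forall f, K f -> f <> @zero_form F V -> nondegenerate f.

(* Main.v *)
Require Import Defs.
From HB Require Import structures.
From mathcomp Require Import all_boot all_algebra all_field.
From mathcomp Require Import ring.
From Stdlib Require Import FunctionalExtensionality.
Local Open Scope ring_scope.
Import GRing.Theory VectorInternalTheory.

Lemma helpR (R : comNzRingType) (b lam x1 x2 y1 y2 z1 z2 : R) :
  lam * ((b * x1 + y1) * z2 - (b * x2 + y2) * z1) =
  b * (lam * (x1 * z2 - x2 * z1)) + lam * (y1 * z2 - y2 * z1).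
Proof. ring. Qed.
Lemma helpR2 (R : comNzRingType) (b lam x1 x2 y1 y2 z1 z2 : R) :
  lam * (z1 * (b * x2 + y2) - z2 * (b * x1 + y1)) =
  b * (lam * (z1 * x2 - z2 * x1)) + lam * (z1 * y2 - z2 * y1).
Proof. ring. Qed.
Lemma helpA (F : fieldType) (L : fieldExtType F) (a : F) (lam x1 x2 y1 y2 z1 z2 : L) :
  lam * ((a *: x1 + y1) * z2 - (a *: x2 + y2) * z1) =
  a *: (lam * (x1 * z2 - x2 * z1)) + lam * (y1 * z2 - y2 * z1).
Proof. rewrite -[a *: x1]mulr_algl -[a *: x2]mulr_algl -[a *: (lam * _)]mulr_algl. exact: helpR. Qed.
Lemma helpB (F : fieldType) (L : fieldExtType F) (a : F) (lam x1 x2 y1 y2 z1 z2 : L) :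
  lam * (z1 * (a *: x2 + y2) - z2 * (a *: x1 + y1)) =
  a *: (lam * (z1 * x2 - z2 * x1)) + lam * (z1 * y2 - z2 * y1).
Proof. rewrite -[a *: x1]mulr_algl -[a *: x2]mulr_algl -[a *: (lam * _)]mulr_algl. exact: helpR2. Qed.

Lemma vect_iso (F : fieldType) (U W : vectType F) : dim U = dim W ->
  exists f : U -> W, [/\ forall a u v, f (a *: u + v) = a *: f u + f v,
     forall u, f u = 0 -> u = 0 & forall w, exists u, f u = w].
Proof.
move=> e.
exists (fun u => r2v (\row_j (v2r u) 0 (cast_ord (esym e) j))); split.
- move=> a u v; rewrite -linearP; apply: f_equal; apply/rowP => j.
  by rewrite !mxE linearP !mxE.
- move=> u h; have := congr1 v2r h; rewrite r2vK linear0 => h2.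
  rewrite -[u]v2rK; have -> : v2r u = 0; last by rewrite linear0.
  apply/rowP => i; rewrite mxE.
  have := congr1 (fun M : 'rV_ _ => M 0 (cast_ord e i)) h2 => /=.
  by rewrite !mxE cast_ordK.
- move=> w; exists (r2v (\row_k (v2r w) 0 (cast_ord e k))).
  rewrite r2vK -[w]v2rK; apply: f_equal; apply/rowP => j.
  by rewrite !mxE cast_ordKV v2rK.
Qed.

Theorem lemma2p3 (F : fieldType) (V : vectType F) (m : nat)
  (hV : \dim (fullv : {vspace V}) = (2 * m)%N)
  (hext : exists L : fieldExtType F, \dim (fullv : {vspace L}) = m) :
  exists b : 'I_m -> V -> V -> F,
    [/\ forall i, alternating_form (b i),
        forms_free b &
        symplectic (span_forms b)].
Proof.
case: hext => L hL; subst m.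
set m := \dim (fullv : {vspace L}).
have edim : dim V = dim (L * L)%type.
  have -> : dim (L * L)%type = (dim L + dim L)%N by [].
  by rewrite -!dimvf hV mul2n addnn.
have [f [flin finj fsurj]] := @vect_iso _ V (L * L)%type edim.
have [i0 hi0] : exists i, v2r (1 : L) 0 i != 0.
  have [i hi|hn] := pickP (fun i => v2r (1 : L) 0 i != 0); first by exists i.
  have h0 : v2r (1 : L) = 0.
    by apply/rowP => i; rewrite mxE; have := hn i => /negbFE/eqP.
  have := v2rK (1 : L); rewrite h0 linear0 => /eqP; rewrite eq_sym oner_eq0.
  by [].
pose phi (x : L) := v2r x 0 i0.
have phiL : forall a x y, phi (a *: x + y) = a * phi x + phi y.
  by move=> a x y; rewrite /phi linearP !mxE.
have phi0 : phi 0 = 0 by rewrite /phi linear0 mxE.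
have phi1 : phi 1 <> 0 by apply/eqP.
pose B (lam : L) (x y : V) :=
  phi (lam * ((f x).1 * (f y).2 - (f x).2 * (f y).1)).
have Balt : forall lam, alternating_form (B lam).
  move=> lam; split; last by move=> v; rewrite /B [(f v).1 * _]mulrC subrr mulr0 phi0.
  split=> a x y z; rewrite /B flin /= -phiL; congr phi.
    exact: helpA.
  exact: helpB.
have Bsum : forall (c : 'I_m -> F) (lam : 'I_m -> L) x y,
    \sum_(i < m) c i * B (lam i) x y = B (\sum_(i < m) c i *: lam i) x y.
  move=> c lam x y; rewrite /B /phi mulr_suml linear_sum summxE.
  by apply: eq_bigr => i _; rewrite -scalerAl linearZ mxE.
have Bnd : forall lam, lam != 0 -> Defs.nondegenerate (B lam).
  move=> lam hl v H; apply: finj.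
  case E: (f v) => [x1 x2].
  have [x10|x1n] := eqVneq x1 0; last first.
    have [w hw] := fsurj (0, (lam * x1)^-1).
    have := H w; rewrite /B hw E /=.
    by rewrite mulr0 subr0 mulrA mulfV ?mulf_neq0.
  have [x20|x2n] := eqVneq x2 0; first by rewrite x10 x20.
  have [w hw] := fsurj (- (lam * x2)^-1, 0).
  have := H w; rewrite /B hw E /=.
  by rewrite mulr0 sub0r !mulrN opprK mulrA mulfV ?mulf_neq0.
have Bz : forall lam, (forall x y, B lam x y = 0) -> lam = 0.
  move=> lam H; apply/eqP; apply/negP => hl.
  have [v hv] := fsurj (1, 0).
  have := Bnd lam (introN idP hl) v (H v); move=> v0.
  have f0 : f 0 = 0.
    by have := flin (-1) 0 0; rewrite scaler0 addr0 scaleN1r addNr.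
  move: hv; rewrite v0 f0 => /(congr1 fst) /= /esym /eqP.
  by rewrite oner_eq0.
pose lam (i : 'I_m) := (vbasis (fullv : {vspace L}))`_i.
exists (fun i => B (lam i)); split.
- by [].
- move=> c hc.
  have H : forall x y, B (\sum_(i < m) c i *: lam i) x y = 0.
    move=> x y; rewrite -Bsum.
    by have := congr1 (fun g => g x y) hc.
  have := Bz _ H => hs.
  have := basis_free (vbasisP (fullv : {vspace L})) => /freeP.
  move=> hf; exact: hf c hs.
- move=> g [c ->] hnz.
  have hb : lincomb_forms c (fun i => B (lam i)) = B (\sum_(i < m) c i *: lam i).
    by apply: functional_extensionality => x; apply: functional_extensionality => y;
       rewrite /lincomb_forms Bsum.
  rewrite hb in hnz *; apply: Bnd; apply/eqP => h0; apply: hnz.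
  rewrite h0; apply: functional_extensionality => x;
    apply: functional_extensionality => y.
  by rewrite /B mul0r phi0.
Qed.
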